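(* Let $N=\{1,\dots,n\}$ with $n\ge 2$ and $\mathcal{D}=\mathbb{R}^n_+$. A rule $R:\mathcal{D}\to\mathbb{R}^n_+$ satisfies scale invariance, downstream impartiality, upstream invariance, and order preservation if and only if it is the no-transfer rule, i.e. $R_i(e)=e_i$ for each $e\in\mathcal{D}$ and each $i\in N$.
   Context: Agents $1,\dots,n$ are located along a linear river, lower index meaning more upstream; agent $i$ has river inflow $e_i\ge 0$, and $e=(e_1,\dots,e_n)\in\mathcal{D}=\mathbb{R}^n_+$. An allocation for $e$ is $x\in\mathbb{R}^n_+$ with $\sum_{i=1}^n x_i=\sum_{i=1}^n e_i$ and $\sum_{i=1}^k x_i\le\sum_{i=1}^k e_i$ for each $k=1,\dots,n-1$. A rule is a map $R:\mathcal{D}\to\mathbb{R}^n_+$ assigning to each $e$ an allocation $R(e)$ for $e$. Axioms: Scale invariance: for each $e\in\mathcal{D}$ and each $\gamma\in\mathbb{R}_+$, $R(\gamma e)=\gamma R(e)$. Upstream invariance: for each $e,e'\in\mathcal{D}$ such that $e_i<e'_i$ for some $i\in N$ and $e_j=e'_j$ for all $j\ne i$, we have $R_k(e)=R_k(e')$ for each $k<i$. Downstream impartiality: for each $e,e'\in\mathcal{D}$ such that $e_i<e'_i$ for some $i\in N$ and $e_j=e'_j$ for all $j\ne i$, and for each $k,l>i$ with $e_k=e_l$, we have $R_k(e')-R_k(e)=R_l(e')-R_l(e)$. Order preservation: for each $e\in\mathcal{D}$ and $i,j\in N$, if $i<j$ and $e_i\ge e_j$ then $R_i(e)\ge R_j(e)$.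 *)

(* Defs.v *)
From HB Require Import structures.
From mathcomp Require Import all_boot all_order all_algebra.
From mathcomp Require Import Rstruct.
Set Implicit Arguments. Unset Strict Implicit. Unset Printing Implicit Defensive.
Import Order.TTheory GRing.Theory Num.Theory.
Local Open Scope ring_scope.

(* Agents are indexed by 'I_n: ordinal i corresponds to agent i+1; a smaller
   index is more upstream. A profile (or allocation) is a map 'I_n -> R. *)
Definition profile (n : nat) := 'I_n -> Rdefinitions.R.

Definition nonneg (n : nat) (e : profile n) : Prop := forall i, (0 <= e i)%R.

Definition allocation (n : nat) (e x : profile n) : Prop :=
  nonneg x /\
  \sum_(i < n) x i = \sum_(i < n) e i /\
  (forall k : nat, (k < n.-1)%N ->
     \sum_(i < n | (i <= k)%N) x i <= \sum_(i < n | (i <= k)%N) e i).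

Definition is_rule (n : nat) (Rl : profile n -> profile n) : Prop :=
  forall e, nonneg e -> allocation e (Rl e).

Definition raise_at (n : nat) (e e' : profile n) (i : 'I_n) : Prop :=
  e i < e' i /\ (forall j, j != i -> e j = e' j).

Definition scale_invariance (n : nat) (Rl : profile n -> profile n) : Prop :=
  forall (e : profile n) (g : Rdefinitions.R), nonneg e -> 0 <= g ->
    Rl (fun i => g * e i) = (fun i => g * Rl e i).

Definition upstream_invariance (n : nat) (Rl : profile n -> profile n) : Prop :=
  forall (e e' : profile n) (i : 'I_n), nonneg e -> nonneg e' -> raise_at e e' i ->
    forall k : 'I_n, (k < i)%N -> Rl e k = Rl e' k.

Definition downstream_impartiality (n : nat) (Rl : profile n -> profile n) : Prop :=
  forall (e e' : profile n) (i : 'I_n), nonneg e -> nonneg e' -> raise_at e e' i ->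
    forall k l : 'I_n, (i < k)%N -> (i < l)%N -> e k = e l ->
      Rl e' k - Rl e k = Rl e' l - Rl e l.

Definition order_preservation (n : nat) (Rl : profile n -> profile n) : Prop :=
  forall (e : profile n) (i j : 'I_n), nonneg e -> (i < j)%N -> e j <= e i ->
    Rl e j <= Rl e i.

Definition no_transfer (n : nat) (Rl : profile n -> profile n) : Prop :=
  forall (e : profile n), nonneg e -> forall i, Rl e i = e i.

(* Main.v *)
Require Import Defs.
From mathcomp Require Import all_boot all_order all_algebra.
From mathcomp Require Import Rstruct.
From mathcomp Require Import lra zify.
From Stdlib Require Import FunctionalExtensionality.
Set Implicit Arguments. Unset Strict Implicit. Unset Printing Implicit Defensive.
Import Order.TTheory GRing.Theory Num.Theory.
Local Open Scope ring_scope.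

Section S.
Variable n : nat.
Variable Rl : profile n -> profile n.

Lemma depend : upstream_invariance Rl -> forall (e e' : profile n) (k : 'I_n),
  nonneg e -> nonneg e' -> (forall i : 'I_n, (i <= k)%N -> e i = e' i) ->
  Rl e k = Rl e' k.
Proof.
move=> UI e e' k ne ne' agr.
pose f m := fun i : 'I_n => if (i < m)%N then e' i else e i.
have nf m : nonneg (f m) by move=> i; rewrite /f; case: ifP.
have f0 : f 0%N = e by apply: functional_extensionality => i.
have fn : f n = e' by apply: functional_extensionality => i; rewrite /f ltn_ord.
suff H : forall m, Rl (f m) k = Rl e k by rewrite -fn H.
elim=> [|m IH]; first by rewrite f0.
rewrite -IH.
case: (ltnP m n) => hm; last first.
  have -> : f m.+1 = f m.
    apply: functional_extensionality => i; rewrite /f.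
    have h1 : (i < m)%N by apply: leq_trans (ltn_ord i) hm.
    by rewrite h1 (leq_trans h1 (leqnSn m)).
  by [].
pose j := Ordinal hm.
have oth : forall i : 'I_n, i != j -> f m.+1 i = f m i.
  move=> i hij; rewrite /f ltnS leq_eqVlt.
  have -> : (nat_of_ord i == m) = false.
    by apply/negbTE; move: hij; apply: contra => /eqP h; apply/eqP/val_inj.
  by [].
have fj1 : f m.+1 j = e' j by rewrite /f /= ltnSn.
have fj0 : f m j = e j by rewrite /f /= ltnn.
have eqcase : e j = e' j -> f m.+1 = f m.
  move=> h; apply: functional_extensionality => i.
  case: (eqVneq i j) => [->|hij]; first by rewrite fj1 fj0 h.
  exact: oth.
case: (leqP j k) => hjk.
  by rewrite (eqcase (agr _ hjk)).
case: (ltgtP (e j) (e' j)) => hee.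
- symmetry; apply: (UI _ _ j) => //.
  split; first by rewrite fj0 fj1.
  by move=> i hij; rewrite oth.
- apply: (UI _ _ j) => //.
  split; first by rewrite fj0 fj1.
  by move=> i hij; rewrite oth.
- by rewrite (eqcase hee).
Qed.

Lemma split3 (F : 'I_n -> Rdefinitions.R) (i : 'I_n) :
  \sum_(j < n) F j = \sum_(j < n | (j < i)%N) F j + F i + \sum_(j < n | (i < j)%N) F j.
Proof.
rewrite (bigID (fun j : 'I_n => (j < i)%N)) /= -addrA; congr (_ + _).
rewrite (bigD1 i) /=; last by rewrite ltnn.
congr (_ + _); apply: eq_bigl => j.
case: (ltngtP j i) => h //=.
- by rewrite -val_eqE /= neq_ltn h orbT.
- by apply/negbTE; rewrite negbK; apply/eqP/val_inj.
Qed.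

Lemma split2 (F : 'I_n -> Rdefinitions.R) (i : 'I_n) :
  \sum_(j < n | (j <= i)%N) F j = \sum_(j < n | (j < i)%N) F j + F i.
Proof.
rewrite (bigD1 i) //= addrC; congr (_ + _); apply: eq_bigl => j.
case: (ltngtP j i) => h //=.
- by rewrite -val_eqE /= neq_ltn h.
- by apply/negbTE; rewrite negbK; apply/eqP/val_inj.
Qed.


Lemma step : is_rule Rl -> upstream_invariance Rl -> order_preservation Rl ->
  forall i : 'I_n, (forall j : 'I_n, (j < i)%N -> forall e, nonneg e -> Rl e j = e j) ->
  forall e, nonneg e -> Rl e i = e i.
Proof.
move=> RR UI OP i IH e ne.
pose e' := fun j : 'I_n => if (j <= i)%N then e j else e i.
have ne' : nonneg e' by move=> j; rewrite /e'; case: ifP.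
have e'i : e' i = e i by rewrite /e' leqnn.
rewrite (depend UI (e' := e')) //; last by move=> j hj; rewrite /e' hj.
rewrite -e'i.
have [_ [tot pre]] := RR _ ne'.
set x := Rl e' in tot pre *.
have lowA : \sum_(j < n | (j < i)%N) x j = \sum_(j < n | (j < i)%N) e' j.
  by apply: eq_bigr => j hj; rewrite /x IH.
have opj : forall j : 'I_n, (i < j)%N -> x j <= x i.
  move=> j hj; apply: OP => //.
  by rewrite /e' leqnn leqNgt hj.
have eqj : \sum_(j < n | (i < j)%N) e' j = \sum_(j < n | (i < j)%N) e' i.
  by apply: eq_bigr => j hj; rewrite /e' leqnn leqNgt hj.
have lo : e' i <= x i.
  rewrite leNgt; apply/negP => lt.
  have h1 : \sum_(j < n | (i < j)%N) x j <= \sum_(j < n | (i < j)%N) e' j.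
    rewrite eqj; apply: ler_sum => j hj.
    exact: le_trans (opj j hj) (ltW lt).
  move: tot; rewrite !(split3 _ i) lowA => tot.
  lra.
apply/eqP; rewrite eq_le lo andbT.
case: (ltnP i n.-1) => hi.
  have := pre _ hi; rewrite !(split2 _ i) lowA => h; lra.
have nj : forall j : 'I_n, (i < j)%N = false.
  move=> j; apply/negbTE; rewrite -leqNgt; have := ltn_ord j; move: hi; lia.
have z (F : 'I_n -> Rdefinitions.R) : \sum_(j < n | (i < j)%N) F j = 0 by apply: big_pred0.
move: tot; rewrite !(split3 _ i) lowA !z => tot; lra.
Qed.

Lemma forward : is_rule Rl -> upstream_invariance Rl -> order_preservation Rl -> no_transfer Rl.
Proof.
move=> RR UI OP e ne i.
suff H : forall m (i : 'I_n), (i < m)%N -> forall e, nonneg e -> Rl e i = e i by exact: H (ltnSn i) _ ne.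
elim=> [|m IH] j hj //.
rewrite ltnS leq_eqVlt in hj; case/orP: hj => hj; last exact: IH.
apply: step => // k hk; apply: IH; by rewrite -(eqP hj).
Qed.

End S.

Theorem theorem3 (n : nat) (Rl : profile n -> profile n) :
  (2 <= n)%N -> is_rule Rl ->
  (scale_invariance Rl /\ downstream_impartiality Rl /\
   upstream_invariance Rl /\ order_preservation Rl) <-> no_transfer Rl.
Proof.
move=> _ RR; split.
  by case=> _ [_ [UI OP]]; exact: forward.
move=> NT; split; [|split; [|split]].
- move=> e g ne g0; apply: functional_extensionality => i.
  rewrite (NT e) // NT //; move=> j; exact: mulr_ge0.
- move=> e e' i ne ne' [_ oth] k l hk hl _.
  rewrite (NT e') // (NT e) // (NT e') // (NT e) // (oth k) ?(oth l) ?subrr //.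
  + by apply/eqP => h; move: hl; rewrite h ltnn.
  + by apply/eqP => h; move: hk; rewrite h ltnn.
- move=> e e' i ne ne' [_ oth] k hk; rewrite (NT e) // (NT e') // oth //.
  by apply/eqP => h; move: hk; rewrite h ltnn.
- by move=> e i j ne _ h; rewrite (NT e) // (NT e).
Qed.
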